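(* Let $P$ be an Eulerian poset of rank $d$. Then $$\sum_{\hat0\le x\le\hat1}B([\hat0,x];u^{-1},v^{-1})(uv)^{\rho(x)}(v-u)^{d-\rho(x)}=\sum_{\hat0\le x\le\hat1}B([x,\hat1];u,v)(uv-1)^{\rho(x)}.$$
   Context: An Eulerian poset is a finite poset with least element $\hat0$, greatest element $\hat1$, all maximal chains of the same length $d$ (the rank), rank function $\rho$, and Möbius function $\mu(x,y)=(-1)^{\rho(y)-\rho(x)}$ for $x\le y$; intervals $[x,y]$ are Eulerian of rank $\rho(y)-\rho(x)$. For Eulerian $Q$ of rank $e$: $G(Q,t)=H(Q,t)=1$ if $e=0$; for $e>0$, $H(Q,t)=\sum_{\hat0<x\le\hat1}(t-1)^{\rho(x)-1}G([x,\hat1],t)$, $G(Q,t)=\tau_{<e/2}((1-t)H(Q,t))$ with $\tau_{<r}(\sum a_it^i)=\sum_{i<r}a_it^i$. $B(Q;u,v)\in\mathbb{Z}[u,v]$ is defined by $B=1$ if $e=0$ and for $e>0$ recursively by $\sum_{\hat0\le x\le\hat1}B([\hat0,x];u,v)u^{e-\rho(x)}G([x,\hat1],u^{-1}v)=G(Q,uv)$. *)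

(* Defs.v *)
From HB Require Import structures.
From mathcomp Require Import all_boot all_order all_algebra.
Set Implicit Arguments. Unset Strict Implicit. Unset Printing Implicit Defensive.
Import Order.TTheory GRing.Theory Num.Theory.
Local Open Scope ring_scope.

Section Eulerian.
Variables (disp : Order.disp_t) (T : finTBPOrderType disp) (rho : T -> nat).

(* The fuel #|T| exceeds the length of every chain, so it is never exhausted. *)
Fixpoint mobius_fuel (n : nat) (x y : T) : int :=
  if n is n'.+1 then
    if x == y then 1
    else if (x <= y)%O then - \sum_(z : T | (x <= z)%O && (z < y)%O) mobius_fuel n' x z
    else 0
  else 0.

Definition mobius (x y : T) : int := mobius_fuel #|T| x y.

Definition graded_rank : Prop :=
  [/\ rho \bot%O = 0%N,
      forall x y : T, (x < y)%O -> (rho x < rho y)%N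
    & forall x y : T, (x < y)%O -> (forall z : T, ~~ ((x < z)%O && (z < y)%O)) ->
        rho y = (rho x).+1 ].

Definition eulerian : Prop :=
  graded_rank /\ forall x y : T, (x <= y)%O -> mobius x y = (-1) ^+ (rho y - rho x).

(* tau_{<r}: keep the coefficients of degree i with i < r;
   i < e/2  <->  i < uphalf e *)
Definition trunc_poly (m : nat) (p : {poly int}) : {poly int} := \poly_(i < m) p`_i.

(* G([x,y], t) with fuel n (any n >= rank of [x,y] works); the interval rank is
   rho y - rho x and the rank of z inside [x,y] is rho z - rho x. *)
Fixpoint G_fuel (n : nat) (x y : T) : {poly int} :=
  if n is n'.+1 then
    let e := (rho y - rho x)%N in
    if e == 0%N then 1
    else
      let H := \sum_(z : T | (x < z)%O && (z <= y)%O)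
                 ('X - 1) ^+ (rho z - rho x).-1 * G_fuel n' z y in
      trunc_poly (uphalf e) ((1 - 'X) * H)
  else 1.

Definition Gpoly (x y : T) : {poly int} := G_fuel (rho y - rho x) x y.

Definition Hpoly (x y : T) : {poly int} :=
  if (rho y - rho x == 0)%N then 1
  else \sum_(z : T | (x < z)%O && (z <= y)%O) ('X - 1) ^+ (rho z - rho x).-1 * Gpoly z y.

(* Bivariate polynomials Z[u,v] are {poly {poly int}}: the outer variable is v,
   the inner (coefficient) variable is u. *)
(* g(uv) *)
Definition subst_uv (g : {poly int}) : {poly {poly int}} :=
  \sum_(i < size g) (g`_i *: 'X^i)%:P * 'X^i.
(* u^e g(u^{-1} v), a polynomial since deg g <= e for the G's used below *)
Definition subst_hom (e : nat) (g : {poly int}) : {poly {poly int}} :=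
  \sum_(i < size g) (g`_i *: 'X^(e - i))%:P * 'X^i.

(* B([x,y];u,v) from
   sum_{x<=z<=y} B([x,z];u,v) u^{rk[z,y]} G([z,y],u^{-1}v) = G([x,y],uv),
   solved for the z = y term (G of a rank-0 interval is 1). *)
Fixpoint B_fuel (n : nat) (x y : T) : {poly {poly int}} :=
  if n is n'.+1 then
    if (rho y - rho x == 0)%N then 1
    else subst_uv (Gpoly x y)
         - \sum_(z : T | (x <= z)%O && (z < y)%O)
             B_fuel n' x z * subst_hom (rho y - rho z) (Gpoly z y)
  else 1.

Definition Bpoly (x y : T) : {poly {poly int}} := B_fuel (rho y - rho x) x y.

End Eulerian.

Definition evalUV (F : fieldType) (p : {poly {poly int}}) (u v : F) : F :=
  (map_poly (fun c : {poly int} => (map_poly intr c).[u]) p).[v].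

(* Main.v *)
Require Import Defs.
From HB Require Import structures.
From mathcomp Require Import all_boot all_order all_algebra.
From mathcomp Require Import zify ring.
Import Order.TTheory GRing.Theory Num.Theory.
Set Implicit Arguments. Unset Strict Implicit. Unset Printing Implicit Defensive.
Local Open Scope ring_scope.



Section Basics.
Variables (disp : Order.disp_t) (T : finTBPOrderType disp) (rho : T -> nat).
Hypothesis hmono : forall x y : T, (x < y)%O -> (rho x < rho y)%N.

Lemma rho_le (x y : T) : (x <= y)%O -> (rho x <= rho y)%N.
Proof. by rewrite le_eqVlt => /orP[/eqP->//|/hmono/ltnW]. Qed.

Lemma rho_eq (x y : T) : (x <= y)%O -> (rho y <= rho x)%N -> x = y.
Proof.
rewrite le_eqVlt => /orP[/eqP->//|/hmono]; lia.
Qed.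

Lemma G_fuelE n m (x y : T) : (rho y - rho x <= n)%N -> (rho y - rho x <= m)%N ->
  G_fuel rho n x y = G_fuel rho m x y.
Proof.
elim: n m x y => [|n IH] [|m] x y hn hm /=.
- by [].
- by have -> : (rho y - rho x == 0)%N by lia.
- by have -> : (rho y - rho x == 0)%N by lia.
case: eqP => // he; congr trunc_poly; congr (_ * _).
apply: eq_bigr => z /andP[xz _]; congr (_ * _); apply: IH.
  by have := hmono xz; lia.
by have := hmono xz; lia.
Qed.

Definition hpoly (x y : T) : {poly int} :=
  \sum_(z : T | (x < z)%O && (z <= y)%O) ('X - 1) ^+ (rho z - rho x).-1 * Gpoly rho z y.

Lemma GpolyE (x y : T) : Gpoly rho x y = if (rho y - rho x == 0)%N then 1
  else trunc_poly (uphalf (rho y - rho x)) ((1 - 'X) * hpoly x y).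
Proof.
rewrite /Gpoly /hpoly; case E: (rho y - rho x)%N => [|e] //=.
rewrite E /=; congr trunc_poly; congr (_ * _).
apply: eq_bigr => z /andP[xz _]; congr (_ * _); apply: G_fuelE => //.
by have := hmono xz; lia.
Qed.

Lemma Gpoly_id (x : T) : Gpoly rho x x = 1.
Proof. by rewrite GpolyE subnn. Qed.

Lemma B_fuelE n m (x y : T) : (rho y - rho x <= n)%N -> (rho y - rho x <= m)%N ->
  B_fuel rho n x y = B_fuel rho m x y.
Proof.
elim: n m x y => [|n IH] [|m] x y hn hm /=.
- by [].
- by have -> : (rho y - rho x == 0)%N by lia.
- by have -> : (rho y - rho x == 0)%N by lia.
case: eqP => // he; congr (_ - _).
apply: eq_bigr => z /andP[xz zy]; congr (_ * _); apply: IH.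
  by have := hmono zy; lia.
by have := hmono zy; lia.
Qed.

Lemma BpolyE (x y : T) : Bpoly rho x y = if (rho y - rho x == 0)%N then 1
  else subst_uv (Gpoly rho x y)
         - \sum_(z : T | (x <= z)%O && (z < y)%O)
             Bpoly rho x z * subst_hom (rho y - rho z) (Gpoly rho z y).
Proof.
rewrite /Bpoly; case E: (rho y - rho x)%N => [|e] //=.
rewrite E /=; congr (_ - _).
apply: eq_bigr => z /andP[xz zy]; congr (_ * _); apply: B_fuelE => //.
by have := hmono zy; lia.
Qed.

Lemma size_Gpoly (x y : T) : (size (Gpoly rho x y) <= (rho y - rho x).+1)%N.
Proof.
rewrite GpolyE; case: eqP => _; first by rewrite size_poly1.
apply: leq_trans (size_poly _ _) _.
rewrite uphalf_half; case: odd => /=; lia.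
Qed.

End Basics.



Section Mob.
Variables (disp : Order.disp_t) (T : finTBPOrderType disp).

Definition cnt (x y : T) := #|[set a : T | (x <= a)%O && (a < y)%O]|.

Lemma cnt_lt (x z y : T) : (x <= z)%O -> (z < y)%O -> (cnt x z < cnt x y)%N.
Proof.
move=> xz zy; apply: proper_card; apply/properP; split.
  apply/subsetP => a; rewrite !inE => /andP[-> az] /=; exact: lt_trans az zy.
by exists z; rewrite !inE ?ltxx ?andbF // xz zy.
Qed.

Lemma cnt_T (x y : T) : (cnt x y < #|T|)%N.
Proof.
rewrite -cardsT; apply: proper_card; apply/properP; split; first exact: subsetT.
by exists y; rewrite !inE ?ltxx ?andbF.
Qed.

Lemma mobius_fuelE n m (x y : T) : (cnt x y < n)%N -> (cnt x y < m)%N ->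
  mobius_fuel n x y = mobius_fuel m x y.
Proof.
elim: n m x y => [|n IH] [|m] x y hn hm //=.
case: eqP => // _; case: ifP => // _; congr (- _).
apply: eq_bigr => z /andP[xz zy]; apply: IH.
  by have := cnt_lt xz zy; lia.
by have := cnt_lt xz zy; lia.
Qed.

Lemma mobius_rec (x y : T) : (x < y)%O ->
  mobius x y = - \sum_(z : T | (x <= z)%O && (z < y)%O) mobius x z.
Proof.
move=> xy; rewrite /mobius.
have hc := cnt_T x y.
move: hc; case: #|T| => [//|N] hc.
rewrite [LHS]/= (lt_eqF xy) (ltW xy); congr (- _).
apply: eq_bigr => z /andP[xz zy]; apply: mobius_fuelE.
  by have := cnt_lt xz zy; lia.
by have := cnt_lt xz zy; lia.
Qed.

Lemma mobius_sum (x y : T) : (x < y)%O ->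
  \sum_(z : T | (x <= z)%O && (z <= y)%O) mobius x z = 0.
Proof.
move=> xy; rewrite (bigD1 y) /=; last by rewrite (ltW xy) lexx.
rewrite mobius_rec // addrC; apply/eqP; rewrite subr_eq0; apply/eqP.
apply: eq_bigl => z; rewrite lt_def; case: (z =P y) => [->|hzy] /=.
  by rewrite eqxx !andbF.
have -> : (y != z) by apply/eqP => E; apply: hzy.
by rewrite andbT.
Qed.

End Mob.



Definition refl (R : nzRingType) (e : nat) (p : {poly R}) : {poly R} :=
  \poly_(i < e.+1) p`_(e - i).

Lemma refl_map (K : fieldType) e (p : {poly int}) :
  map_poly (intr : int -> K) (refl e p) = refl e (map_poly intr p).
Proof.
apply/polyP => i.
rewrite (@coef_map_id0 _ _ (intr : int -> K) (refl e p) i) ?rmorph0 // !coef_poly.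
case: ifP => _; last by rewrite rmorph0.
case: ifP => // /negbT; rewrite -leqNgt => /(nth_default 0) ->.
by rewrite rmorph0.
Qed.

Lemma refl_eval (K : fieldType) e (p : {poly K}) t : t != 0 -> (size p <= e.+1)%N ->
  (refl e p).[t] = t ^+ e * p.[t^-1].
Proof.
move=> t0 sp.
rewrite (horner_coef_wide _ (size_poly _ _)) (horner_coef_wide _ sp) mulr_sumr.
rewrite [LHS](reindex_inj rev_ord_inj) /=; apply: eq_bigr => i _.
rewrite coef_poly; have hi := ltn_ord i.
have -> : (e.+1 - i.+1 < e.+1)%N by lia.
have -> : (e - (e.+1 - i.+1) = i)%N by lia.
rewrite mulrCA; congr (_ * _).
rewrite exprVn -exprB ?unitfE //.
Qed.

Lemma size_sum_le (R : nzRingType) (I : Type) (r : seq I) (P : pred I) (F : I -> {poly R}) n :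
  (forall i, P i -> (size (F i) <= n)%N) -> (size (\sum_(i <- r | P i) F i)%R <= n)%N.
Proof.
move=> H; apply: (big_ind (fun p : {poly R} => (size p <= n)%N)) => //.
  by rewrite size_poly0.
move=> p q hp hq; apply: leq_trans (size_polyD _ _) _; by rewrite geq_max hp hq.
Qed.

Lemma poly_eq_rat (p q : {poly int}) :
  (forall t : rat, t != 0 -> (map_poly intr p).[t] = (map_poly intr q).[t]) -> p = q.
Proof.
move=> H; apply: (@map_inj_poly _ _ (intr : int -> rat)).
- exact: intr_inj.
- exact: rmorph0.
apply/eqP; rewrite -subr_eq0; apply/eqP.
set r := _ - _.
apply/eqP; apply/negPn/negP => r0.
pose rs := [seq (i.+1)%:R : rat | i <- iota 0 (size r)].
have hall : all (root r) rs.
  apply/allP => t /mapP[i _ ->]; rewrite /root /r hornerD hornerN H ?subrr //.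
  by rewrite pnatr_eq0.
have hu : uniq rs.
  rewrite map_inj_uniq ?iota_uniq // => i j /eqP; by rewrite eqr_nat => /eqP[].
by have := max_poly_roots r0 hall hu; rewrite size_map size_iota ltnn.
Qed.



Notation ev1 t := (horner_eval t \o map_poly intr).

Lemma ev1X (K : fieldType) (t : K) : ev1 t 'X = t.
Proof. by rewrite /= map_polyX /horner_eval hornerX. Qed.

Lemma ev1M (K : fieldType) (t : K) p q : ev1 t (p * q) = ev1 t p * ev1 t q.
Proof. by rewrite rmorphM. Qed.

Lemma size_map_le (K : fieldType) (p : {poly int}) : (size (map_poly (intr : int -> K) p) <= size p)%N.
Proof. exact: size_poly. Qed.

Lemma size_mul_le_sum (R : nzRingType) (p q : {poly R}) a b :
  (size p <= a.+1)%N -> (size q <= b.+1)%N -> (size (p * q)%R <= (a + b).+1)%N.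
Proof. move=> hp hq; apply: leq_trans (size_mul_leq _ _) _; lia. Qed.

Section KLS.
Variables (disp : Order.disp_t) (T : finTBPOrderType disp) (rho : T -> nat).
Hypothesis hmono : forall x y : T, (x < y)%O -> (rho x < rho y)%N.
Hypothesis heul : forall x y : T, (x <= y)%O -> mobius x y = (-1) ^+ (rho y - rho x).

Lemma exch (R : nmodType) (P : pred T) (y : T) (f : T -> T -> R) :
  (forall z w, P z -> (z <= w)%O -> P w) ->
  \sum_(z | P z && (z <= y)%O) \sum_(w | (z <= w)%O && (w <= y)%O) f z w
  = \sum_(w | P w && (w <= y)%O) \sum_(z | P z && (z <= w)%O) f z w.
Proof.
move=> hP; rewrite (exchange_big_dep (fun w => P w && (w <= y)%O)) /=.
  apply: eq_bigr => w /andP[Pw wy]; apply: eq_bigl => z.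
  case Pz: (P z) => //=; case zw: (z <= w)%O; rewrite ?andbF ?andbT //=.
  by rewrite wy (le_trans zw wy).
by move=> z w /andP[Pz _] /andP[zw ->]; rewrite (hP z w) .
Qed.

Lemma cond_lt (x y z : T) :
  [&& (x <= z)%O, (z <= y)%O & z != x] = (x < z)%O && (z <= y)%O.
Proof. by rewrite lt_def; case: (x <= z)%O; case: (z <= y)%O; case: (z != x). Qed.

Lemma sign_sum (K : fieldType) (x w : T) : (x < w)%O ->
  \sum_(z | (x < z)%O && (z <= w)%O) ((-1) ^+ (rho z - rho x).-1 : K) = 1.
Proof.
move=> xw.
have h0 : \sum_(z | (x <= z)%O && (z <= w)%O) ((-1) ^+ (rho z - rho x) : K) = 0.
  have := congr1 (intr : int -> K) (mobius_sum xw).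
  rewrite rmorph_sum rmorph0 => h; rewrite -[RHS]h; apply: eq_bigr => z /andP[xz _].
  by rewrite heul // rmorphXn rmorphN1.
move: h0; rewrite (bigD1 x) /=; last by rewrite lexx (ltW xw).
rewrite subnn expr0 => /eqP; rewrite addrC addr_eq0 => /eqP h.
rewrite -[RHS]opprK -[in RHS]h -sumrN; apply: eq_big => [z|z /andP[xz _]].
  by rewrite -cond_lt andbA.
have := hmono xz; case E: (rho z - rho x)%N => [|k]; first lia.
by move=> _; rewrite exprS mulN1r opprK.
Qed.

Lemma KLSe_of (K : fieldType) (x y : T) (t : K) : t != 0 ->
  refl (rho y - rho x) (Gpoly rho x y)
    = \sum_(z | (x <= z)%O && (z <= y)%O) ('X - 1) ^+ (rho z - rho x) * Gpoly rho z y ->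
  t ^+ (rho y - rho x) * ev1 t^-1 (Gpoly rho x y)
    = \sum_(z | (x <= z)%O && (z <= y)%O) (t - 1) ^+ (rho z - rho x) * ev1 t (Gpoly rho z y).
Proof.
move=> t0 E.
transitivity (ev1 t (refl (rho y - rho x) (Gpoly rho x y))).
  rewrite /= refl_map /horner_eval refl_eval //.
  exact: leq_trans (size_map_le _ _) (size_Gpoly hmono _ _).
rewrite E rmorph_sum; apply: eq_bigr => z _.
by rewrite rmorphM rmorphXn rmorphB rmorph1 /= map_polyX /horner_eval hornerX.
Qed.

Lemma KLS_base (y : T) : refl (rho y - rho y) (Gpoly rho y y)
  = \sum_(z | (y <= z)%O && (z <= y)%O) ('X - 1) ^+ (rho z - rho y) * Gpoly rho z y.
Proof.
rewrite (big_pred1 y) => [|z]; last by rewrite /= -eq_le eq_sym.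
rewrite subnn expr0 mul1r Gpoly_id //; apply/polyP => i; rewrite coef_poly coef1.
by rewrite coef1; case: i.
Qed.

Lemma KLS_n n : forall x y : T, (rho y - rho x <= n)%N -> (x <= y)%O ->
  refl (rho y - rho x) (Gpoly rho x y)
    = \sum_(z | (x <= z)%O && (z <= y)%O) ('X - 1) ^+ (rho z - rho x) * Gpoly rho z y.
Proof.
elim: n => [|n IH] x y hn xy.
  have exy : x = y by apply: (rho_eq hmono xy); lia.
  by subst; exact: KLS_base.
have [hyx|hxy] := leqP (rho y) (rho x).
  by have exy := rho_eq hmono xy hyx; subst; exact: KLS_base.
set e := (rho y - rho x)%N.
have he : (0 < e)%N by rewrite /e; lia.
have IHe : forall (K : fieldType) z (t : K), t != 0 -> (x < z)%O -> (z <= y)%O ->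
    t ^+ (rho y - rho z) * ev1 t^-1 (Gpoly rho z y)
    = \sum_(w | (z <= w)%O && (w <= y)%O) (t - 1) ^+ (rho w - rho z) * ev1 t (Gpoly rho w y).
  move=> K z t t0 xz zy; apply: KLSe_of => //; apply: IH => //.
  by have := hmono xz; rewrite /e in hn; lia.
have hG : Gpoly rho x y = trunc_poly (uphalf e) ((1 - 'X) * hpoly rho x y).
  by rewrite GpolyE //; case: eqP => //; rewrite -/e; lia.
set h := hpoly rho x y in hG *.
have hsh : (size h <= e)%N.
  apply: size_sum_le => z /andP[xz zy].
  apply: leq_trans (@size_mul_le_sum _ _ _ (rho z - rho x).-1 (rho y - rho z) _ (size_Gpoly hmono z y)) _.
    by rewrite -polyC1 size_exp_XsubC.
  have := hmono xz; have := rho_le hmono zy; rewrite /e; lia.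
have hsF : (size ((1 - 'X) * h)%R <= e.+1)%N.
  have hsh' : (size h <= e.-1.+1)%N by rewrite prednK.
  apply: leq_trans (@size_mul_le_sum _ (1 - 'X) h 1 e.-1 _ hsh') _.
    by rewrite -opprB size_polyN -polyC1 size_XsubC.
  lia.
have hA : forall t : rat, t != 0 -> t ^+ e.-1 * ev1 t^-1 h = ev1 t h.
  move=> t t0.
  rewrite /h /hpoly !rmorph_sum mulr_sumr.
  transitivity (\sum_(z | (x < z)%O && (z <= y)%O) \sum_(w | (z <= w)%O && (w <= y)%O)
     (1 - t) ^+ (rho z - rho x).-1 * ((t - 1) ^+ (rho w - rho z) * ev1 t (Gpoly rho w y))).
    apply: eq_bigr => z /andP[xz zy]; rewrite -mulr_sumr -IHe //.
    rewrite rmorphM rmorphXn rmorphB rmorph1 /= map_polyX /horner_eval hornerX.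
    have ht : t ^+ (rho z - rho x).-1 * (t^-1 - 1) ^+ (rho z - rho x).-1 = (1 - t) ^+ (rho z - rho x).-1.
      by rewrite -exprMn mulrBr mulfV // mulr1.
    have -> : e.-1 = ((rho z - rho x).-1 + (rho y - rho z))%N.
      by have := hmono xz; have := rho_le hmono zy; rewrite /e; lia.
    rewrite exprD -ht.
    move: (t ^+ _) (t ^+ _) ((t^-1 - 1) ^+ _) ((map_poly intr (Gpoly rho z y)).[t^-1]) => a b c d.
    ring.
  rewrite (@exch _ (fun z => (x < z)%O)); last by move=> z w xz zw; exact: lt_le_trans xz zw.
  apply: eq_bigr => w /andP[xw wy].
  transitivity (\sum_(z | (x < z)%O && (z <= w)%O) (-1) ^+ (rho z - rho x).-1 *
     ((t - 1) ^+ (rho w - rho x).-1 * ev1 t (Gpoly rho w y))).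
    apply: eq_bigr => z /andP[xz zw].
    rewrite -opprB (exprNn (t - 1)) -!mulrA; congr (_ * _); rewrite mulrA -exprD.
    congr (_ ^+ _ * _); have := hmono xz; have := rho_le hmono zw; lia.
  rewrite -mulr_suml sign_sum // mul1r.
  by rewrite rmorphM rmorphXn rmorphB rmorph1 /= map_polyX /horner_eval hornerX.
have hB : refl e ((1 - 'X) * h) = - ((1 - 'X) * h).
  apply: poly_eq_rat => t t0.
  rewrite refl_map refl_eval //; last exact: leq_trans (size_map_le _ _) hsF.
  change ((map_poly intr ((1 - 'X) * h)).[t^-1]) with (ev1 t^-1 ((1 - 'X) * h)).
  change ((map_poly intr (- ((1 - 'X) * h))).[t]) with (ev1 t (- ((1 - 'X) * h))).
  rewrite rmorphN !rmorphM !rmorphB !rmorph1 /= !map_polyX /horner_eval !hornerX.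
  have hAt := hA t t0; rewrite /= /horner_eval in hAt; rewrite -[in RHS]hAt.
  have -> : e = e.-1.+1 by lia.
  rewrite exprS /=.
  move: (t ^+ e.-1) ((map_poly intr h).[t^-1]) => a b.
  by field.
set Fp := (1 - 'X) * h in hB hsF hG *.
have hC : refl e (Gpoly rho x y) = Gpoly rho x y - Fp.
  have hFi : forall i, (i <= e)%N -> Fp`_(e - i) = - Fp`_i.
    move=> i hi; have := congr1 (fun p : {poly int} => p`_i) hB.
    by rewrite /= coef_poly coefN ltnS hi.
  have hFz : forall i, (e < i)%N -> Fp`_i = 0.
    by move=> i hi; apply: nth_default; exact: leq_trans hsF hi.
  have hm : (e <= uphalf e + uphalf e <= e.+1)%N.
    by have := odd_double_half e; rewrite uphalf_half; case: odd => /=; lia.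
  rewrite hG /trunc_poly; apply/polyP => i; rewrite coefB !coef_poly.
  case: (ltnP e i) => hi.
    have -> : (i < e.+1)%N = false by lia.
    by rewrite hFz //; case: ifP => _; rewrite subrr.
  rewrite ltnS hi hFi //.
  case: ifP => h1; case: ifP => h2.
  - exfalso; move/andP: hm => [hm1 hm2]; lia.
  - by rewrite sub0r.
  - by rewrite subrr.
  - have := hFi i hi; rewrite (_ : (e - i = i)%N); last by move/andP: hm; lia.
    move=> /eqP; rewrite -addr_eq0 -mulr2n mulrn_eq0 /= => /eqP ->.
    by rewrite subrr.
have hD : \sum_(z | (x <= z)%O && (z <= y)%O) ('X - 1) ^+ (rho z - rho x) * Gpoly rho z y
    = Gpoly rho x y + ('X - 1) * h.
  rewrite (bigD1 x) /=; last by rewrite lexx xy.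
  rewrite subnn expr0 mul1r; congr (_ + _).
  rewrite /h /hpoly mulr_sumr; apply: eq_big => [z|z /andP[/andP[xz0 _] zx]].
    by rewrite -andbA cond_lt.
  have xz : (x < z)%O by rewrite lt_def zx xz0.
  have hl := hmono xz.
  have E : (rho z - rho x = (rho z - rho x).-1.+1)%N by lia.
  by rewrite {1}E exprS mulrA.
rewrite hC hD /Fp; ring.
Qed.

Lemma KLSe (K : fieldType) (x y : T) (t : K) : t != 0 -> (x <= y)%O ->
  t ^+ (rho y - rho x) * ev1 t^-1 (Gpoly rho x y)
    = \sum_(z | (x <= z)%O && (z <= y)%O) (t - 1) ^+ (rho z - rho x) * ev1 t (Gpoly rho z y).
Proof. by move=> t0 xy; apply: KLSe_of => //; apply: (KLS_n (leqnn _)). Qed.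

End KLS.



Notation evUV a b := (horner_eval b \o map_poly (horner_eval a \o map_poly intr)).

Lemma evalUVE (F : fieldType) (p : {poly {poly int}}) (a b : F) : evalUV p a b = evUV a b p.
Proof. by []. Qed.

Lemma evUVB (F : fieldType) (a b : F) p q : evUV a b (p - q) = evUV a b p - evUV a b q.
Proof. exact: rmorphB. Qed.
Lemma evUVM (F : fieldType) (a b : F) p q : evUV a b (p * q) = evUV a b p * evUV a b q.
Proof. exact: rmorphM. Qed.
Lemma evUV1 (F : fieldType) (a b : F) : evUV a b 1 = 1.
Proof. exact: rmorph1. Qed.
Lemma evUV_sum (F : fieldType) (a b : F) (I : Type) (r : seq I) (P : pred I) f :
  evUV a b (\sum_(i <- r | P i) f i) = \sum_(i <- r | P i) evUV a b (f i).
Proof. exact: rmorph_sum. Qed.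

Lemma ev1_coef (F : fieldType) (t : F) (g : {poly int}) :
  ev1 t g = \sum_(i < size g) (g`_i)%:~R * t ^+ i.
Proof.
rewrite /= /horner_eval (horner_coef_wide _ (size_map_le _ _)).
apply: eq_bigr => i _.
by rewrite (@coef_map_id0 _ _ (intr : int -> F)) ?rmorph0.
Qed.

Lemma ev1_CX (F : fieldType) (t : F) (c : int) i : ev1 t (c *: 'X^i) = c%:~R * t ^+ i.
Proof.
by rewrite -mul_polyC rmorphM rmorphXn /= map_polyC map_polyX /horner_eval hornerC hornerX.
Qed.

Lemma evUV_CX (F : fieldType) (a b : F) (q : {poly int}) i :
  evUV a b (q%:P * 'X^i) = ev1 a q * b ^+ i.
Proof.
by rewrite rmorphM rmorphXn /= map_polyC map_polyX /horner_eval hornerC hornerX.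
Qed.

Lemma ev_subst_uv (F : fieldType) (a b : F) (g : {poly int}) : evUV a b (subst_uv g) = ev1 (a * b) g.
Proof.
rewrite /subst_uv rmorph_sum ev1_coef; apply: eq_bigr => i _.
etransitivity; first exact: evUV_CX.
by rewrite ev1_CX exprMn mulrA.
Qed.

Lemma ev_subst_hom (F : fieldType) (a b : F) k (g : {poly int}) : a != 0 -> (size g <= k.+1)%N ->
  evUV a b (subst_hom k g) = a ^+ k * ev1 (b / a) g.
Proof.
move=> a0 sg.
rewrite /subst_hom rmorph_sum ev1_coef mulr_sumr; apply: eq_bigr => i _.
etransitivity; first exact: evUV_CX.
rewrite ev1_CX exprB ?unitfE //; last by have := ltn_ord i; lia.
rewrite exprMn exprVn.
move: (a ^+ k) (a ^+ i) ((g`_i)%:~R : F) (b ^+ i) => p q r s'.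
ring.
Qed.

Section Main.
Variables (disp : Order.disp_t) (T : finTBPOrderType disp) (rho : T -> nat).
Hypothesis hmono : forall x y : T, (x < y)%O -> (rho x < rho y)%N.
Hypothesis heul : forall x y : T, (x <= y)%O -> mobius x y = (-1) ^+ (rho y - rho x).

Lemma ev1_1 (F : fieldType) (t : F) : ev1 t (1 : {poly int}) = 1.
Proof. by rewrite rmorph1. Qed.

Lemma Brel (F : fieldType) (a b : F) (x y : T) : a != 0 -> (x <= y)%O ->
  \sum_(z | (x <= z)%O && (z <= y)%O)
     evalUV (Bpoly rho x z) a b * (a ^+ (rho y - rho z) * ev1 (b / a) (Gpoly rho z y))
  = ev1 (a * b) (Gpoly rho x y).
Proof.
move=> a0 xy.
have [hyx|hxy] := leqP (rho y) (rho x).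
  have exy := rho_eq hmono xy hyx; subst.
  rewrite (big_pred1 y) => [|z]; last by rewrite /= -eq_le eq_sym.
  rewrite Gpoly_id // BpolyE // subnn eqxx expr0 mul1r ev1_1 mulr1 evalUVE.
  by rewrite rmorph1 ev1_1.
rewrite (bigD1 y); last by rewrite xy lexx.
rewrite subnn expr0 mul1r Gpoly_id // ev1_1 mulr1.
rewrite BpolyE //; have -> : (rho y - rho x == 0)%N = false by lia.
rewrite evalUVE evUVB ev_subst_uv evUV_sum.
have E : \sum_(i | (x <= i <= y)%O && (i != y))
     evalUV (Bpoly rho x i) a b * (a ^+ (rho y - rho i) * ev1 (b / a) (Gpoly rho i y))
   = \sum_(i | (x <= i < y)%O)
       evUV a b (Bpoly rho x i * subst_hom (rho y - rho i) (Gpoly rho i y)).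
  apply: eq_big => [i|i _].
    by rewrite lt_def [y == i]eq_sym andbAC -andbA.
  by rewrite evUVM ev_subst_hom // size_Gpoly.
by rewrite E; apply: subrK.
Qed.

Lemma cancel_tri (F : fieldType) (x : T) (f g : T -> F) (c : T -> T -> F) :
  (forall y, c y y = 1) ->
  (forall y, (x <= y)%O -> \sum_(w | (x <= w)%O && (w <= y)%O) f w * c w y
                         = \sum_(w | (x <= w)%O && (w <= y)%O) g w * c w y) ->
  forall y, (x <= y)%O -> f y = g y.
Proof.
move=> hc H.
suff: forall n y, (rho y < n)%N -> (x <= y)%O -> f y = g y.
  by move=> H' y; apply: H' (ltnSn _).
elim=> [|n IH] y // hy xy.
have := H y xy.
rewrite (bigD1 y); last by rewrite xy lexx.
rewrite [in RHS](bigD1 y); last by rewrite xy lexx.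
rewrite hc !mulr1.
rewrite (eq_bigr (fun w => g w * c w y)) => [/addIr //|w /andP[/andP[xw wy] wne]].
have wlty : (w < y)%O by rewrite lt_def eq_sym wne wy.
by rewrite (IH w) //; have := hmono wlty; lia.
Qed.

End Main.

Section Final.
Variables (disp : Order.disp_t) (T : finTBPOrderType disp) (rho : T -> nat).
Hypothesis hmono : forall x y : T, (x < y)%O -> (rho x < rho y)%N.
Hypothesis heul : forall x y : T, (x <= y)%O -> mobius x y = (-1) ^+ (rho y - rho x).
Variables (F : fieldType) (u v : F).
Hypotheses (u0 : u != 0) (v0 : v != 0).

Let gh (z y : T) := u ^+ (rho y - rho z) * ev1 (v / u) (Gpoly rho z y).
Let beta (x y : T) := evalUV (Bpoly rho x y) u v.
Let beta' (x y : T) := (u * v) ^+ (rho y - rho x) * evalUV (Bpoly rho x y) u^-1 v^-1.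

Lemma claim1 (x y : T) : (x <= y)%O ->
  \sum_(z | (x <= z)%O && (z <= y)%O) beta' x z * (v ^+ (rho y - rho z) * ev1 (u / v) (Gpoly rho z y))
  = \sum_(w | (x <= w)%O && (w <= y)%O) (u * v - 1) ^+ (rho w - rho x) * ev1 (u * v) (Gpoly rho w y).
Proof.
move=> xy.
have uv0 : u * v != 0 by rewrite mulf_neq0.
rewrite -(@KLSe _ _ _ hmono heul F x y (u * v) uv0 xy).
have := @Brel _ _ _ hmono F u^-1 v^-1 x y (invr_neq0 u0) xy.
rewrite invfM => <-; rewrite mulr_sumr; apply: eq_bigr => z /andP[xz zy].
rewrite /beta' invrK [v^-1 * u]mulrC.
have -> : (rho y - rho x = (rho z - rho x) + (rho y - rho z))%N.
  by have := rho_le hmono xz; have := rho_le hmono zy; lia.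
rewrite exprD.
have hv : (u * v) ^+ (rho y - rho z) * u^-1 ^+ (rho y - rho z) = v ^+ (rho y - rho z).
  by rewrite -exprMn mulrAC mulfV // mul1r.
rewrite -hv.
move: ((u * v) ^+ _) ((u * v) ^+ _) (u^-1 ^+ _) (evalUV _ _ _) (ev1 _ _) => a b c d e.
ring.
Qed.

Lemma claim2 (z y : T) : (z <= y)%O ->
  v ^+ (rho y - rho z) * ev1 (u / v) (Gpoly rho z y)
  = \sum_(w | (z <= w)%O && (w <= y)%O) (v - u) ^+ (rho w - rho z) * gh w y.
Proof.
move=> zy.
have vu0 : v / u != 0 by rewrite mulf_neq0 ?invr_eq0.
have := @KLSe _ _ _ hmono heul F z y (v / u) vu0 zy.
rewrite invf_div => /(congr1 (fun s => u ^+ (rho y - rho z) * s)).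
rewrite mulrA -exprMn [u * (v / u)]mulrC divfK // => ->.
rewrite mulr_sumr; apply: eq_bigr => w /andP[zw wy].
rewrite /gh.
have -> : (rho y - rho z = (rho w - rho z) + (rho y - rho w))%N.
  by have := rho_le hmono zw; have := rho_le hmono wy; lia.
rewrite exprD.
have hu : u ^+ (rho w - rho z) * (v / u - 1) ^+ (rho w - rho z) = (v - u) ^+ (rho w - rho z).
  by rewrite -exprMn mulrBr mulrC divfK // mulr1.
rewrite -hu.
move: (u ^+ (rho w - rho z)) (u ^+ (rho y - rho w)) ((v / u - 1) ^+ _) (ev1 _ _) => a b c d.
ring.
Qed.

Lemma combined (x y : T) : (x <= y)%O ->
  \sum_(w | (x <= w)%O && (w <= y)%O)
     (\sum_(z | (x <= z)%O && (z <= w)%O) beta' x z * (v - u) ^+ (rho w - rho z)) * gh w y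
  = \sum_(w | (x <= w)%O && (w <= y)%O)
     (\sum_(z | (x <= z)%O && (z <= w)%O) (u * v - 1) ^+ (rho z - rho x) * beta z w) * gh w y.
Proof.
move=> xy.
transitivity (\sum_(z | (x <= z)%O && (z <= y)%O) beta' x z * (v ^+ (rho y - rho z) * ev1 (u / v) (Gpoly rho z y))).
  symmetry.
  transitivity (\sum_(z | (x <= z)%O && (z <= y)%O) \sum_(w | (z <= w)%O && (w <= y)%O)
      beta' x z * ((v - u) ^+ (rho w - rho z) * gh w y)).
    apply: eq_bigr => z /andP[xz zy]; rewrite claim2 // mulr_sumr //.
  rewrite (@exch _ _ _ (fun z => (x <= z)%O)); last by move=> z w xz zw; exact: le_trans xz zw.
  apply: eq_bigr => w _; rewrite mulr_suml; apply: eq_bigr => z _; by rewrite mulrA.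
rewrite claim1 //.
transitivity (\sum_(w | (x <= w)%O && (w <= y)%O) \sum_(z | (w <= z)%O && (z <= y)%O)
      (u * v - 1) ^+ (rho w - rho x) * (beta w z * gh z y)).
  apply: eq_bigr => w /andP[xw wy]; rewrite -mulr_sumr; congr (_ * _).
  by rewrite -(@Brel _ _ _ hmono F u v w y u0 wy).
rewrite (@exch _ _ _ (fun z => (x <= z)%O)); last by move=> z w xz zw; exact: le_trans xz zw.
apply: eq_bigr => w _; rewrite mulr_suml; apply: eq_bigr => z _; by rewrite mulrA.
Qed.

End Final.

Unset Implicit Arguments.

Theorem proposition2p11 (disp : Order.disp_t) (T : finTBPOrderType disp)
  (rho : T -> nat) (d : nat) :
  eulerian rho -> rho \top%O = d ->
  forall (F : fieldType) (u v : F), u != 0 -> v != 0 ->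
  \sum_(x : T | (\bot <= x <= \top)%O)
     evalUV (Bpoly rho \bot%O x) u^-1 v^-1 * (u * v) ^+ rho x * (v - u) ^+ (d - rho x)
  = \sum_(x : T | (\bot <= x <= \top)%O)
     evalUV (Bpoly rho x \top%O) u v * (u * v - 1) ^+ rho x.
Proof.
move=> [[hbot hmono _] heul] hd F u v u0 v0.
pose f := fun w : T => \sum_(z | (\bot <= z)%O && (z <= w)%O)
   ((u * v) ^+ (rho z - rho \bot%O) * evalUV (Bpoly rho \bot%O z) u^-1 v^-1) * (v - u) ^+ (rho w - rho z).
pose g := fun w : T => \sum_(z | (\bot <= z)%O && (z <= w)%O)
   (u * v - 1) ^+ (rho z - rho \bot%O) * evalUV (Bpoly rho z w) u v.
have E : f \top%O = g \top%O.
  apply: (@cancel_tri _ _ rho hmono F \bot%O f g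
    (fun w y => u ^+ (rho y - rho w) * ev1 (v / u) (Gpoly rho w y))) => [y|y hy|].
  - by rewrite subnn expr0 mul1r Gpoly_id // rmorph1.
  - exact: (combined hmono heul u0 v0 hy).
  - exact: le0x.
transitivity (f \top%O).
  rewrite /f /= hbot hd; apply: eq_bigr => x _.
  by rewrite subn0 [_ * evalUV _ _ _]mulrC.
rewrite E /g /= hbot; apply: eq_bigr => x _.
by rewrite subn0 mulrC.
Qed.
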